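(* Suppose $f:\mathbb{R}_{>0}\to\mathbb{R}_{\ge0}$ is twice differentiable at every $x>0$ with $f''(x)>0$ and $f'(1)=f(1)=0$. If there exist constants $L,U>0$ such that $L\le f''(x)\le U$ for all $x\in[\frac12,\frac32]$, then for every $\zeta\ge1$ and every $x\in(-\frac1{2\zeta},0)\cup(0,\frac1{2\zeta})$, $$\frac{x f'(1+\zeta x)}{f(1+x)}\le\frac{2U}{L}\zeta;$$ that is, $f$ satisfies the condition below with $F(\zeta)=\frac{2U}{L}\zeta$.
   Context: The condition referred to: $f$ is a convex continuous function $(0,\infty)\to[0,\infty)$ with $f(1)=0$, twice differentiable at every $x\ne1$ with $f''(x)\ge0$, $f'(x)<0$ on $(0,1)$ and $f'(x)>0$ on $(1,\infty)$, and there is $F:\mathbb{R}^+\to\mathbb{R}^+$ with $F(\zeta)\le\mathrm{poly}(\zeta)$ such that $\frac{xf'(1+\zeta x)}{f(1+x)}\le F(\zeta)$ for all $\zeta\ge1$ and $x\in(-\frac1{2\zeta},0)\cup(0,\frac1{2\zeta})$. *)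

(* Defs.v *)
From Stdlib Require Import Reals.
From Coquelicot Require Import Coquelicot.

(* Main.v *)
Require Import Defs.
From Stdlib Require Import Reals Lra Psatz.
From Coquelicot Require Import Coquelicot.
Open Scope R_scope.

Lemma mvt_h (h dh : R -> R) (a b : R) :
  (forall t, Rmin a b <= t <= Rmax a b -> is_derive h t (dh t)) ->
  exists c, Rmin a b <= c <= Rmax a b /\ h b - h a = dh c * (b - a).
Proof.
  intros H. apply MVT_gen.
  - intros t Ht. apply H. lra.
  - intros t Ht. apply continuity_pt_filterlim.
    apply (ex_derive_continuous h t). exists (dh t). now apply H.
Qed.

Theorem lemma6p1 (f f1 f2 : R -> R) (L U : R) :
  (forall x, 0 < x -> 0 <= f x) ->
  (forall x, 0 < x -> is_derive f x (f1 x)) ->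
  (forall x, 0 < x -> is_derive f1 x (f2 x)) ->
  (forall x, 0 < x -> 0 < f2 x) ->
  f1 1 = 0 -> f 1 = 0 ->
  0 < L -> 0 < U ->
  (forall x, 1/2 <= x <= 3/2 -> L <= f2 x <= U) ->
  forall zeta x, 1 <= zeta ->
    ((- (1 / (2 * zeta)) < x < 0) \/ (0 < x < 1 / (2 * zeta))) ->
    x * f1 (1 + zeta * x) / f (1 + x) <= (2 * U / L) * zeta.
Proof.
  intros Hf0 Hf Hf1 Hf2 H11 H01 HL HU HB zeta x Hz Hx.
  assert (Hq : zeta * (1 / (2 * zeta)) = 1/2) by (field; lra).
  assert (Hq2 : 1 / (2 * zeta) <= 1/2).
  { apply Rmult_le_reg_l with zeta; [lra|]. rewrite Hq. nra. }
  assert (Hzx : -1/2 < zeta * x < 1/2 /\ -1/2 < x < 1/2 /\ x <> 0)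
    by (destruct Hx; repeat split; nra).
  destruct (mvt_h f1 f2 1 (1 + zeta * x)) as [c [Hc Ec]].
  { intros t Ht. apply Hf1.
    unfold Rmin, Rmax in Ht; destruct Rle_dec; lra. }
  assert (Hc2 : 1/2 <= c <= 3/2)
    by (unfold Rmin, Rmax in Hc; destruct Rle_dec; lra).
  assert (Num : x * f1 (1 + zeta * x) <= zeta * x * x * U).
  { rewrite H11 in Ec. replace (1 + zeta * x - 1) with (zeta * x) in Ec by ring.
    rewrite Rminus_0_r in Ec. rewrite Ec.
    specialize (HB c Hc2).
    assert (0 <= zeta * (x * x) * (U - f2 c)) by (apply Rmult_le_pos; [apply Rmult_le_pos; nra|lra]).
    nra. }
  set (g := fun t => f t - L / 2 * ((t - 1) * (t - 1))).
  set (dg := fun t => f1 t - L * (t - 1)).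
  assert (Hg : forall t, 0 < t -> is_derive g t (dg t)).
  { intros t Ht. unfold g, dg. assert (D : is_derive (fun t => L / 2 * ((t - 1) * (t - 1))) t (L * (t - 1)))
      by (auto_derive; try easy; field).
    exact (is_derive_minus _ _ _ _ _ (Hf t Ht) D). }
  assert (Hdg : forall t, 0 < t -> is_derive dg t (f2 t - L)).
  { intros t Ht. unfold dg. assert (D : is_derive (fun t => L * (t - 1)) t L)
      by (auto_derive; try easy; field).
    exact (is_derive_minus _ _ _ _ _ (Hf1 t Ht) D). }
  destruct (mvt_h g dg 1 (1 + x)) as [c1 [Hc1 Ec1]].
  { intros t Ht. apply Hg.
    unfold Rmin, Rmax in Ht; destruct Rle_dec; lra. }
  destruct (mvt_h dg (fun t => f2 t - L) 1 c1) as [d [Hd Ed]].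
  { intros t Ht. apply Hdg.
    unfold Rmin, Rmax in Ht, Hc1; destruct Rle_dec; destruct Rle_dec; lra. }
  assert (Hd2 : 1/2 <= d <= 3/2 /\ 0 <= (c1 - 1) * x).
  { unfold Rmin, Rmax in Hd, Hc1; destruct Rle_dec; destruct Rle_dec; split; nra. }
  assert (Den : L / 2 * (x * x) <= f (1 + x)).
  { unfold g, dg in Ec1, Ed. rewrite H01 in Ec1. rewrite H11 in Ed.
    destruct Hd2 as [Hd2 Hcx]. specialize (HB d Hd2).
    assert (0 <= (f2 d - L) * ((c1 - 1) * x)) by (apply Rmult_le_pos; lra).
    assert (E : f (1 + x) - L / 2 * (x * x) = (f2 d - L) * ((c1 - 1) * x)).
    { replace (1 + x - 1) with x in Ec1 by ring.
      replace (f1 c1 - L * (c1 - 1)) with ((f2 d - L) * (c1 - 1)) in Ec1 by lra.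
      replace (f (1 + x) - L / 2 * (x * x)) with
        (f (1 + x) - L / 2 * (x * x) - (0 - L / 2 * ((1 - 1) * (1 - 1)))) by ring.
      rewrite Ec1. ring. }
    lra. }
  assert (Hxx : 0 < x * x) by (destruct Hzx as [_ [_ Hn]]; nra).
  assert (Hfp : 0 < f (1 + x)) by nra.
  unfold Rdiv. apply Rmult_le_reg_r with (f (1 + x)); [lra|].
  rewrite Rmult_assoc, Rinv_l by lra. rewrite Rmult_1_r.
  apply Rle_trans with (zeta * x * x * U); [lra|].
  assert (2 * U * / L * zeta * f (1 + x) >= 2 * U * / L * zeta * (L / 2 * (x * x))).
  { apply Rle_ge, Rmult_le_compat_l; [|lra].
    apply Rmult_le_pos; [|lra]. apply Rmult_le_pos; [lra|]. left; now apply Rinv_0_lt_compat. }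
  replace (2 * U * / L * zeta * (L / 2 * (x * x))) with (zeta * x * x * U) in H by (field; lra).
  lra.
Qed.
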